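(* The metric $g$ is Killing (i.e. $\mathrm{Ad}$-invariant: $g([x,y],z)=g(x,[y,z])$ for all $x,y,z\in\mathfrak l$) if and only if $(L,\varphi,\xi,\eta,g)$ belongs to $\mathcal{F}_8\oplus\mathcal{F}_{10}$ with $2\lambda=-\nu$, where $\lambda=F_{101}$ and $\nu=F_{011}$. Equivalently, $g$ is Killing iff $C_{12}^0=-C_{01}^2=-C_{02}^1$ and all other $C_{ij}^k$ ($i<j$) vanish.
   Context: Let $L$ be a 3-dimensional real connected Lie group with Lie algebra $\mathfrak l$, and let $\{E_0,E_1,E_2\}$ be a basis of left-invariant vector fields, with $[E_i,E_j]=C_{ij}^kE_k$. Define the left-invariant almost contact structure $(\varphi,\xi,\eta)$ by $\varphi E_0=0$, $\varphi E_1=E_2$, $\varphi E_2=-E_1$, $\xi=E_0$, $\eta(E_0)=1$, $\eta(E_1)=\eta(E_2)=0$, and the left-invariant pseudo-Riemannian metric $g$ by $g(E_0,E_0)=g(E_1,E_1)=-g(E_2,E_2)=1$, $g(E_i,E_j)=0$ for $i\neq j$. Let $\nabla$ be the Levi-Civita connection of $g$, $F(x,y,z)=g((\nabla_x\varphi)y,z)$, and $F_{ijk}=F(E_i,E_j,E_k)$. The manifold belongs to $\mathcal{F}_8$ iff all $F_{ijk}$ vanish except possibly $F_{101}=F_{110}=F_{202}=F_{220}=:\lambda$; to $\mathcal{F}_{10}$ iff all vanish except possibly $F_{011}=F_{022}=:\nu$; it belongs to $\mathcal{F}_8\oplus\mathcal{F}_{10}$ iff $F$ is the sum of a tensor of the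 $\mathcal{F}_8$ form and a tensor of the $\mathcal{F}_{10}$ form, i.e. all $F_{ijk}$ vanish except possibly $F_{101}=F_{110}=F_{202}=F_{220}=\lambda$ and $F_{011}=F_{022}=\nu$. *)

(* Defs.v *)
From Stdlib Require Import Reals.
Open Scope R_scope.

Inductive idx : Set := i0 | i1 | i2.

Definition idx_eqb (a b : idx) : bool :=
  match a, b with
  | i0, i0 | i1, i1 | i2, i2 => true
  | _, _ => false
  end.

Definition sum3 (f : idx -> R) : R := f i0 + f i1 + f i2.

(* Elements of l, written in coordinates w.r.t. {E_0,E_1,E_2}. *)
Definition vec := idx -> R.

Definition E (i : idx) : vec := fun j => if idx_eqb i j then 1 else 0.

(* Structure constants: C i j k = C_{ij}^k, i.e. [E_i,E_j] = sum_k C_{ij}^k E_k. *)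
Definition structure_constants := idx -> idx -> idx -> R.

Definition is_lie_algebra (C : structure_constants) : Prop :=
  (forall i j k, C i j k = - C j i k) /\
  (forall i j k m,
     sum3 (fun l => C i j l * C l k m + C j k l * C l i m + C k i l * C l j m) = 0).

Definition br (C : structure_constants) (x y : vec) : vec :=
  fun k => sum3 (fun i => sum3 (fun j => x i * y j * C i j k)).

Definition eps (i : idx) : R := match i with i0 => 1 | i1 => 1 | i2 => -1 end.
Definition g (x y : vec) : R := sum3 (fun i => eps i * x i * y i).

Definition phi (x : vec) : vec :=
  fun k => match k with i0 => 0 | i1 => - x i2 | i2 => x i1 end.
Definition xi : vec := E i0.
Definition eta (x : vec) : R := x i0.

(* Levi-Civita connection of the left-invariant metric g on left-invariant
   vector fields, given by the Koszul formula
   2 g(nabla_x y, z) = g([x,y],z) - g([y,z],x) + g([z,x],y),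
   and raised with g^{-1} = diag(eps). *)
Definition nabla (C : structure_constants) (x y : vec) : vec :=
  fun k => eps k * / 2 *
    (g (br C x y) (E k) - g (br C y (E k)) x + g (br C (E k) x) y).

Definition vsub (x y : vec) : vec := fun k => x k - y k.

(* F(x,y,z) = g((nabla_x phi) y, z). *)
Definition Ften (C : structure_constants) (x y z : vec) : R :=
  g (vsub (nabla C x (phi y)) (phi (nabla C x y))) z.

Definition Fc (C : structure_constants) (i j k : idx) : R :=
  Ften C (E i) (E j) (E k).

Definition F8F10_form (lam nu : R) (i j k : idx) : R :=
  match i, j, k with
  | i1, i0, i1 | i1, i1, i0 | i2, i0, i2 | i2, i2, i0 => lam
  | i0, i1, i1 | i0, i2, i2 => nu
  | _, _, _ => 0
  end.

Definition killing (C : structure_constants) : Prop :=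
  forall x y z : vec, g (br C x y) z = g x (br C y z).

(* Main.v *)
Require Import Defs.
From Stdlib Require Import Reals Lra FunctionalExtensionality.
Open Scope R_scope.

Ltac unf := cbv [Fc Ften g br sum3 E nabla vsub phi eps idx_eqb F8F10_form killing xi eta] in *.

Definition tri (a b c : R) (l : idx) : R := match l with i0 => a | i1 => b | i2 => c end.
Definition mkC (a b c d e f p q r : R) : structure_constants := fun i j =>
  match i, j with
  | i0, i1 => tri a b c | i1, i0 => tri (-a) (-b) (-c)
  | i0, i2 => tri d e f | i2, i0 => tri (-d) (-e) (-f)
  | i1, i2 => tri p q r | i2, i1 => tri (-p) (-q) (-r)
  | _, _ => tri 0 0 0 end.

Definition FE (a b c d e f p q r : R) (i j k : idx) : R :=
  match i, j, k with
  | i0, i0, i1 => d | i0, i0, i2 => -a | i0, i1, i0 => d | i0, i1, i1 => e+p+c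
  | i0, i2, i0 => -a | i0, i2, i2 => c+p+e
  | i1, i0, i1 => (-c+e+p)/2 | i1, i0, i2 => -b | i1, i1, i0 => (p+e-c)/2
  | i1, i1, i1 => 2*q | i1, i2, i0 => -b | i1, i2, i2 => 2*q
  | i2, i0, i1 => -f | i2, i0, i2 => (-e+c+p)/2 | i2, i1, i0 => -f
  | i2, i1, i1 => -2*r | i2, i2, i0 => (p+c-e)/2 | i2, i2, i2 => -2*r
  | _, _, _ => 0 end.

Ltac simp := repeat rewrite ?Rmult_0_l, ?Rmult_0_r, ?Rmult_1_l, ?Rmult_1_r, ?Rplus_0_l, ?Rplus_0_r, ?Rminus_0_r, ?Rminus_0_l.

Lemma Fc_mk a b c d e f p q r i j k : Fc (mkC a b c d e f p q r) i j k = FE a b c d e f p q r i j k.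
Proof.
  destruct i, j, k; cbv [mkC tri Fc Ften g br sum3 E nabla vsub phi eps idx_eqb FE];
  simp; field.
Qed.

Definition Fform (C : structure_constants) :=
  (forall i j k, Fc C i j k = F8F10_form (Fc C i1 i0 i1) (Fc C i0 i1 i1) i j k)
      /\ 2 * Fc C i1 i0 i1 = - Fc C i0 i1 i1.

Definition conds (C : structure_constants) :=
      C i1 i2 i0 = - C i0 i1 i2 /\ C i1 i2 i0 = - C i0 i2 i1 /\
      C i0 i1 i0 = 0 /\ C i0 i1 i1 = 0 /\
      C i0 i2 i0 = 0 /\ C i0 i2 i2 = 0 /\
      C i1 i2 i1 = 0 /\ C i1 i2 i2 = 0.

Lemma F_iff_mk a b c d e f p q r : Fform (mkC a b c d e f p q r) <-> conds (mkC a b c d e f p q r).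
Proof.
  unfold Fform, conds; split.
  - intros [H H'].
    pose proof (H i0 i0 i1). pose proof (H i0 i0 i2). pose proof (H i1 i0 i2).
    pose proof (H i1 i1 i1). pose proof (H i2 i0 i1). pose proof (H i2 i1 i1).
    pose proof (H i2 i0 i2).
    clear H. rewrite !Fc_mk in *. cbv [mkC tri FE F8F10_form] in *. lra.
  - intros [h1 [h2 [h3 [h4 [h5 [h6 [h7 h8]]]]]]].
    cbv [mkC tri] in h1, h2, h3, h4, h5, h6, h7, h8.
    rewrite !Fc_mk. cbv [FE].
    split.
    + intros i j k; rewrite Fc_mk; cbv [FE F8F10_form]; destruct i, j, k; lra.
    + lra.
Qed.

Section S.
Variable C : structure_constants.
Hypothesis HA : forall i j k, C i j k = - C j i k.

Lemma Cii i k : C i i k = 0.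
Proof. pose proof (HA i i k); lra. Qed.

Lemma Ceq : C = mkC (C i0 i1 i0) (C i0 i1 i1) (C i0 i1 i2) (C i0 i2 i0) (C i0 i2 i1) (C i0 i2 i2)
                    (C i1 i2 i0) (C i1 i2 i1) (C i1 i2 i2).
Proof.
  apply functional_extensionality; intro i;
  apply functional_extensionality; intro j;
  apply functional_extensionality; intro k.
  destruct i, j, k; cbv [mkC tri]; try apply Cii; try reflexivity; apply HA.
Qed.

Ltac rw := repeat first
  [ rewrite (Cii i0) in * | rewrite (Cii i1) in * | rewrite (Cii i2) in *
  | rewrite (HA i1 i0) in * | rewrite (HA i2 i0) in * | rewrite (HA i2 i1) in * ].

Lemma K_iff : killing C <-> conds C.
Proof.
  unfold conds; split.
  - intro H.
    pose proof (H (E i0) (E i1) (E i0)) as K1.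
    pose proof (H (E i0) (E i1) (E i1)) as K2.
    pose proof (H (E i0) (E i2) (E i0)) as K3.
    pose proof (H (E i0) (E i2) (E i2)) as K4.
    pose proof (H (E i1) (E i2) (E i1)) as K5.
    pose proof (H (E i1) (E i2) (E i2)) as K6.
    pose proof (H (E i0) (E i1) (E i2)) as K7.
    pose proof (H (E i0) (E i2) (E i1)) as K8.
    pose proof (H (E i1) (E i2) (E i0)) as K9.
    pose proof (H (E i1) (E i0) (E i2)) as K10.
    clear H. unf. rw. lra.
  - intros [h1 [h2 [h3 [h4 [h5 [h6 [h7 h8]]]]]]] x y z.
    unf. rw.
    assert (e1 : C i0 i1 i2 = - C i1 i2 i0) by lra.
    assert (e2 : C i0 i2 i1 = - C i1 i2 i0) by lra.
    rewrite e1, e2, h3, h4, h5, h6, h7, h8. ring.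
Qed.

Lemma F_iff : Fform C <-> conds C.
Proof. rewrite Ceq. apply F_iff_mk. Qed.
End S.

Theorem theorem2p2 (C : structure_constants) (HC : is_lie_algebra C) :
  (killing C <->
     ((forall i j k, Fc C i j k = F8F10_form (Fc C i1 i0 i1) (Fc C i0 i1 i1) i j k)
      /\ 2 * Fc C i1 i0 i1 = - Fc C i0 i1 i1))
  /\
  (killing C <->
     (C i1 i2 i0 = - C i0 i1 i2 /\ C i1 i2 i0 = - C i0 i2 i1 /\
      C i0 i1 i0 = 0 /\ C i0 i1 i1 = 0 /\
      C i0 i2 i0 = 0 /\ C i0 i2 i2 = 0 /\
      C i1 i2 i1 = 0 /\ C i1 i2 i2 = 0)).
Proof.
  destruct HC as [HA _].
  pose proof (K_iff C HA) as K. pose proof (F_iff C HA) as F.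
  unfold Fform, conds in *. tauto.
Qed.
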